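(* Let $n\ge3$ and let $L$ and ${}^*L=e^{\sigma(x)}L+\beta$ be as in the context. Define $K_{ijk}=\frac{1}{L}\big[c_{ijk}-(h_{ij}M_k+h_{kj}M_i+h_{ki}M_j)\big]$ with $M_i=\frac{c_i}{n+1}$, and ${}^*K_{ijk}$ by the same formula built from ${}^*L$. Then ${}^*K_{ijk}=e^{\sigma(x)}K_{ijk}$.
   Context: $M$ is a smooth manifold of dimension $n$ with local coordinates $(x^i)$ and induced fiber coordinates $(y^i)$ on $TM$. $L(x,y)$ is a Finsler metric: positive and smooth for $y\neq0$, positively homogeneous of degree 1 in $y$, with positive definite fundamental tensor $g_{ij}=\frac12\frac{\partial^2L^2}{\partial y^i\partial y^j}$ and inverse $g^{ij}$. $\sigma(x)$ is a smooth function on $M$ and $\beta(x,y)=b_i(x)y^i$ is a 1-form; the conformal $\beta$-change is ${}^*L=e^{\sigma(x)}L+\beta$, assumed to be again a Finsler metric. Notation: $l_i=\partial L/\partial y^i$, $h_{ij}=g_{ij}-l_il_j$, $c_{ijk}=\frac12\partial g_{ij}/\partial y^k$, $c_i=g^{jk}c_{ijk}$. Quantities built from ${}^*L$ by the same formulas (using ${}^*g_{ij}$ and its inverse ${}^*g^{ij}$) are denoted with a left asterisk. *)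

(* Defs.v *)
(* Finsler geometry in a local chart: points x and
   fiber coordinates y are row vectors in R^n; all tensors are computed from
   y-derivatives at a fixed x. *)
From HB Require Import structures.
From mathcomp Require Import all_boot all_order all_algebra.
From mathcomp Require Import all_classical all_reals all_analysis.
Set Implicit Arguments. Unset Strict Implicit. Unset Printing Implicit Defensive.
Import Order.TTheory GRing.Theory Num.Theory.
Import numFieldNormedType.Exports.
Local Open Scope ring_scope.

Section Finsler.
Variables (R : realType) (n : nat).
Implicit Types (F : 'rV[R]_n -> R) (y : 'rV[R]_n).

Definition ebase (i : 'I_n) : 'rV[R]_n := delta_mx 0 i.

Definition pd (i : 'I_n) (F : 'rV[R]_n -> R) : 'rV[R]_n -> R :=
  fun y => 'D_(ebase i) F y.

Definition iterpd (s : seq 'I_n) F : 'rV[R]_n -> R := foldr pd F s.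

Definition smooth_off0 F : Prop :=
  forall (s : seq 'I_n) y, y != 0 -> differentiable (iterpd s F) y.

Definition gF F y : 'M[R]_n :=
  \matrix_(i, j) (2^-1 * pd j (pd i (fun z => F z ^+ 2)) y).

Definition ginv F y : 'M[R]_n := invmx (gF F y).

Definition posdef (A : 'M[R]_n) : Prop :=
  forall v : 'rV[R]_n, v != 0 -> 0 < (v *m A *m v^T) 0 0.

(* Finsler metric (at a fixed point x of M) *)
Definition is_finsler F : Prop :=
  [/\ forall y, y != 0 -> 0 < F y,
      forall y (lam : R), y != 0 -> 0 < lam -> F (lam *: y) = lam * F y,
      smooth_off0 F &
      forall y, y != 0 -> posdef (gF F y)].

Definition lF F (i : 'I_n) y : R := pd i F y.
Definition hF F (i j : 'I_n) y : R := gF F y i j - lF F i y * lF F j y.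
Definition cF F (i j k : 'I_n) y : R := 2^-1 * pd k (fun z => gF F z i j) y.
Definition cvF F (i : 'I_n) y : R :=
  \sum_(j < n) \sum_(k < n) ginv F y j k * cF F i j k y.
Definition MF F (i : 'I_n) y : R := cvF F i y / (n.+1)%:R.
Definition KF F (i j k : 'I_n) y : R :=
  (F y)^-1 * (cF F i j k y -
    (hF F i j y * MF F k y + hF F k j y * MF F i y + hF F k i y * MF F j y)).

Definition betaF (b : 'rV[R]_n) y : R := \sum_(i < n) b 0 i * y 0 i.

Definition conf_beta F (s : R) (b : 'rV[R]_n) : 'rV[R]_n -> R :=
  fun y => expR s * F y + betaF b y.

End Finsler.

(* Main.v *)
Require Import Defs.
From HB Require Import structures.
From mathcomp Require Import all_boot all_order all_algebra.
From mathcomp Require Import all_classical all_reals all_analysis.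
From mathcomp Require Import ring lra.
Set Implicit Arguments. Unset Strict Implicit. Unset Printing Implicit Defensive.
Import Order.TTheory GRing.Theory Num.Theory.
Import numFieldNormedType.Exports.
Local Open Scope ring_scope.

Section S.
Context {R : realType} {V : normedModType R}.

Lemma diff_eps (f : V -> R) x : differentiable f x -> forall e : R, 0 < e ->
  \forall w \near 0, `|f (w + x) - f x - 'd f x w| <= e * `|w|.
Proof.
move=> /diff_locally /eqaddoP H e e0.
have := H e e0. apply: filterS => w /=.
by rewrite /= opprD addrA.
Qed.

Lemma is_derive_line (f : V -> R) (p u : V) (t0 : R) :
  derivable f (p + t0 *: u) u ->
  is_derive t0 1 (fun t : R => f (p + t *: u)) ('D_u f (p + t0 *: u)).
Proof.
move=> df.
have E : (fun h : R => h^-1 *: ((fun t : R => f (p + t *: u)) (h *: 1 + t0) - f (p + t0 *: u)))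
  = (fun h : R => h^-1 *: (f (h *: u + (p + t0 *: u)) - f (p + t0 *: u))).
  apply: funext => h /=; congr (_ *: (f _ - _)).
  by rewrite -[h *: 1]/(h * 1) mulr1 scalerDl addrCA.
split.
  by move: df; rewrite /derivable /= E.
by rewrite /derive /= E.
Qed.

Lemma schwarz_est (f : V -> R) (y u v : V) :
  (\forall z \near y, differentiable f z) ->
  differentiable ('D_u f) y ->
  forall e : R, 0 < e -> exists2 d : R, 0 < d & forall h : R, 0 < h -> h < d ->
  `|(f (y + h *: v + h *: u) - f (y + h *: u)) - (f (y + h *: v) - f y)
     - h ^+ 2 * 'D_v ('D_u f) y| <= 2 * e * h ^+ 2 * (`|u| + `|v|).
Proof.
move=> Hf Hu e e0.
have [r r0 Hr] : exists2 r : R, 0 < r & forall z, `|y - z| < r -> differentiable f z.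
  by move/nbhs_normP: Hf => [r r0 Hr]; exists r => // z Hz; apply: Hr.
have [r' r'0 Hr'] : exists2 r' : R, 0 < r' & forall w, `|w| < r' ->
    `|'D_u f (w + y) - 'D_u f y - 'd ('D_u f) y w| <= e * `|w|.
  by move/nbhs_norm0P: (diff_eps Hu e0) => [r' r'0 Hr']; exists r'.
pose M := `|u| + `|v| + 1.
have M0 : 0 < M by rewrite /M ltr_pwDr // addr_ge0.
exists (Num.min r r' / M); first by rewrite divr_gt0 // lt_min r0 r'0.
move=> h h0 hd.
have hM : h * M < Num.min r r' by rewrite -ltr_pdivlMr.
have bnd : forall t : R, 0 <= t <= h -> forall s : R, 0 <= s <= h ->
    `|t *: u + s *: v| <= h * (`|u| + `|v|).
  move=> t /andP[t0 th] s /andP[s0 sh].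
  rewrite (le_trans (ler_normD _ _)) // !normrZ !ger0_norm // mulrDr.
  by rewrite lerD // ler_wpM2r.
have bndr : forall t : R, 0 <= t <= h -> forall s : R, 0 <= s <= h ->
    `|t *: u + s *: v| < Num.min r r'.
  move=> t ht s hs; rewrite (le_lt_trans (bnd t ht s hs)) // (le_lt_trans _ hM) //.
  by apply: ler_wpM2l; [exact: ltW | rewrite /M lerDl ler01].
pose phi := fun t : R => f ((y + h *: v) + t *: u) - f (y + t *: u).
pose dphi := fun t : R => 'D_u f ((y + h *: v) + t *: u) - 'D_u f (y + t *: u).
have dfz : forall t : R, 0 <= t <= h -> forall s : R, 0 <= s <= h ->
    differentiable f (y + s *: v + t *: u).
  move=> t ht s hs; apply: Hr.
  rewrite -addrA opprD addrA subrr sub0r normrN addrC.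
  by have := bndr t ht s hs; rewrite lt_min => /andP[].
have hh : 0 <= h <= h by rewrite lexx ltW.
have zh : 0 <= (0:R) <= h by rewrite lexx ltW.
have dph : forall t, 0 <= t <= h -> is_derive t 1 phi (dphi t).
  move=> t ht.
  have A := is_derive_line (@diff_derivable _ _ _ _ _ u (dfz t ht h hh)).
  have B : is_derive t 1 (fun s => f (y + s *: u)) ('D_u f (y + t *: u)).
    apply: is_derive_line; apply: diff_derivable.
    by have := dfz t ht 0 zh; rewrite scale0r addr0.
  exact: (is_deriveB A B).
have cont : {within `[0, h], continuous phi}%classic.
  apply: continuous_in_subspaceT => t tin.
  have ht : 0 <= t <= h by move: tin; rewrite inE /= in_itv.
  apply: differentiable_continuous; apply/derivable1_diffP; exact: (@ex_derive _ _ _ _ _ _ _ (dph t ht)).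
have [c cin Hc] := MVT h0 (fun t tin => dph t (subset_itv_oo_cc tin)) cont.
have hc : 0 <= c <= h by move: cin; rewrite in_itv /= => /andP[? ?]; rewrite !ltW.
rewrite (_ : f (y + h*:v + h*:u) - f (y + h*:u) - (f (y + h*:v) - f y) = phi h - phi 0);
  last by rewrite /phi !scale0r !addr0.
rewrite Hc subr0 deriveE //.
set Dd := 'd ('D_u f) y v.
pose w1 := c *: u + h *: v.
have w1r : `|w1| < r' by have := bndr c hc h hh; rewrite lt_min => /andP[].
have w2r : `|c *: u| < r'.
  by have := bndr c hc 0 zh; rewrite scale0r addr0 lt_min => /andP[].
have w1b : `|w1| <= h * (`|u| + `|v|) by exact: bnd.
have w2b : `|c *: u| <= h * (`|u| + `|v|).
  by have := bnd c hc 0 zh; rewrite scale0r addr0.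
have e1 := Hr' w1 w1r.
have e2 := Hr' _ w2r.
set E1 := 'D_u f (w1 + y) - 'D_u f y - 'd ('D_u f) y w1 in e1.
set E2 := 'D_u f (c *: u + y) - 'D_u f y - 'd ('D_u f) y (c *: u) in e2.
have eqd : dphi c = E1 - E2 + h * Dd.
  rewrite /dphi /E1 /E2 /w1 linearD !linearZ /= -/Dd.
  have -> : y + h *: v + c *: u = c *: u + h *: v + y.
    by rewrite -addrA addrC [h *: v + _]addrC.
  rewrite [y + c *: u]addrC.
  rewrite -[h *: Dd]/(h * Dd).
  ring.
rewrite eqd.
have -> : (E1 - E2 + h * Dd) * h - h ^+ 2 * Dd = (E1 - E2) * h by ring.
rewrite normrM (ger0_norm (ltW h0)).
have : `|E1 - E2| <= 2 * e * h * (`|u| + `|v|).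
  rewrite (le_trans (ler_normB _ _)) //.
  have : e * `|w1| + e * `|c *: u| <= 2 * e * h * (`|u| + `|v|).
    have := ler_wpM2l (ltW e0) w1b; have := ler_wpM2l (ltW e0) w2b.
    move=> a1 a2; rewrite (le_trans (lerD a2 a1)) //.
    by rewrite le_eqVlt; apply/orP; left; apply/eqP; ring.
  by apply: le_trans; apply: lerD.
move=> H; have := ler_wpM2r (ltW h0) H.
move=> H2; rewrite (le_trans H2) //.
by rewrite le_eqVlt; apply/orP; left; apply/eqP; ring.
Qed.

Lemma schwarz (f : V -> R) (y u v : V) :
  (\forall z \near y, differentiable f z) ->
  differentiable ('D_u f) y -> differentiable ('D_v f) y ->
  'D_v ('D_u f) y = 'D_u ('D_v f) y.
Proof.
move=> Hf Hu Hv.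
set D1 := 'D_v ('D_u f) y; set D2 := 'D_u ('D_v f) y.
set K := `|u| + `|v|.
have K0 : 0 <= K by rewrite addr_ge0.
have key : forall e : R, 0 < e -> `|D1 - D2| <= 4 * e * K.
  move=> e e0.
  have [d1 d10 H1] := @schwarz_est f y u v Hf Hu e e0.
  have [d2 d20 H2] := @schwarz_est f y v u Hf Hv e e0.
  pose h := Num.min d1 d2 / 2.
  have hm : 0 < Num.min d1 d2 by rewrite lt_min d10 d20.
  have h0 : 0 < h by rewrite divr_gt0.
  have hlt : h < Num.min d1 d2 by rewrite /h ltr_pdivrMr // ltr_pMr // ltr1n.
  move: hlt; rewrite lt_min => /andP[hl1 hl2].
  have A := H1 h h0 hl1.
  have B := H2 h h0 hl2.
  rewrite [y + h *: u + h *: v]addrAC -/D2 in B.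
  rewrite -/D1 -/K in A; rewrite [`|v| + _]addrC -/K in B.
  have h20 : 0 < h ^+ 2 by rewrite exprn_gt0.
  rewrite -(ler_pM2l h20).
  have -> : h ^+ 2 * `|D1 - D2| =
    `|(f (y + h *: v + h *: u) - f (y + h *: v) - (f (y + h *: u) - f y) - h ^+ 2 * D2)
      - (f (y + h *: v + h *: u) - f (y + h *: u) - (f (y + h *: v) - f y) - h ^+ 2 * D1)|.
    by rewrite -{1}[h ^+ 2]ger0_norm ?ltW // -normrM; congr `|_|; ring.
  rewrite (le_trans (ler_normB _ _)) // (le_trans (lerD B A)) //.
  by rewrite le_eqVlt; apply/orP; left; apply/eqP; ring.
apply/eqP; rewrite -subr_eq0 -normr_le0.
apply/ler_addgt0Pr => e e0; rewrite add0r.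
have K1 : 0 < K + 1 by rewrite ltr_wpDl.
have := key (e / (4 * (K + 1))) (divr_gt0 e0 (mulr_gt0 (ltr0n _ 4) K1)).
move/le_trans; apply.
have -> : 4 * (e / (4 * (K + 1))) * K = e * (K / (K + 1)).
  by field; rewrite gt_eqF.
apply: ler_piMr; [exact: ltW | rewrite ler_pdivrMr // mul1r lerDl ler01 //].
Qed.
End S.

Section F.
Context {R : realType} {n : nat}.
Local Notation V := 'rV[R]_n.
Implicit Types (f g F : V -> R) (z : V).
Local Notation e_ i := (ebase R i).

Lemma near_nz z : z != 0 -> \forall w \near z, w != 0.
Proof. move=> z0; have := @cvgr_neq0 _ _ _ (nbhs z) _ id z cvg_id z0; exact. Qed.

Lemma derive_quot f (x v : V) (c : R) :
  (\forall h \near ((0:R)^')%classic, h^-1 *: (f (h *: v + x) - f x) = c) ->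
  derivable f x v /\ 'D_v f x = c.
Proof.
move=> H; split; first exact: (is_cvg_near_cst c H).
by rewrite /derive; apply: cvg_lim => //; exact: (cvg_near_cst c H).
Qed.

Lemma derive_affine f (x v : V) (c : R) :
  (forall h : R, f (h *: v + x) - f x = h * c) -> derivable f x v /\ 'D_v f x = c.
Proof.
move=> H; apply: derive_quot; near=> h.
rewrite H -[h^-1 *: _]/(h^-1 * _) mulrA mulVf ?mul1r //.
near: h; exact: nbhs_dnbhs_neq.
Unshelve. all: by end_near. Qed.

Lemma ebaseE (i k : 'I_n) : e_ i 0 k = (i == k)%:R.
Proof. by rewrite /ebase mxE eqxx eq_sym. Qed.

Lemma pd_coord (k i : 'I_n) z : derivable (fun w : V => w 0 k) z (e_ i) /\
  pd i (fun w : V => w 0 k) z = (i == k)%:R.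
Proof.
have Hq : forall h : R, (h *: e_ i + z) 0 k - z 0 k = h * e_ i 0 k.
  by move=> h; rewrite !mxE addrK.
have [H1 H2] := @derive_affine (fun w : V => w 0 k) z (e_ i) (e_ i 0 k) Hq.
by split => //; rewrite /pd H2 ebaseE.
Qed.

Lemma pd_beta (b : V) (i : 'I_n) z : derivable (betaF b) z (e_ i) /\
  pd i (betaF b) z = b 0 i.
Proof.
rewrite /pd (_ : b 0 i = betaF b (e_ i)); last first.
  rewrite /betaF (bigD1 i) //= ebaseE eqxx mulr1 big1 ?addr0 // => k ki.
  by rewrite ebaseE eq_sym (negbTE ki) mulr0.
apply: derive_affine => h.
rewrite /betaF -sumrB mulr_sumr; apply: eq_bigr => k _.
rewrite !mxE; ring.
Qed.

Lemma pdD f g z (i : 'I_n) : derivable f z (e_ i) -> derivable g z (e_ i) ->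
  pd i (fun w => f w + g w) z = pd i f z + pd i g z.
Proof. by move=> df dg; rewrite /pd -deriveD. Qed.

Lemma pdM f g z (i : 'I_n) : derivable f z (e_ i) -> derivable g z (e_ i) ->
  pd i (fun w => f w * g w) z = f z * pd i g z + g z * pd i f z.
Proof. by move=> df dg; rewrite /pd -deriveM. Qed.

Lemma pdZ (k : R) f z (i : 'I_n) : derivable f z (e_ i) ->
  pd i (fun w => k * f w) z = k * pd i f z.
Proof. by move=> df; rewrite /pd -deriveMl. Qed.

Lemma pd_cst (c : R) z (i : 'I_n) : pd i (fun _ : V => c) z = 0.
Proof. exact: derive_cst. Qed.

Lemma pd_near f g z (i : 'I_n) : (\forall w \near z, f w = g w) -> pd i f z = pd i g z.
Proof. exact: near_eq_derive. Qed.


Lemma sm_diff F s z : smooth_off0 F -> z != 0 -> differentiable (iterpd s F) z.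
Proof. by move=> H z0; apply: H. Qed.

Lemma sm_der F s z (v : V) : smooth_off0 F -> z != 0 -> derivable (iterpd s F) z v.
Proof. by move=> H z0; apply: diff_derivable; apply: H. Qed.

Lemma sm_near F s z : smooth_off0 F -> z != 0 ->
  \forall w \near z, differentiable (iterpd s F) w.
Proof. by move=> H z0; apply: filterS (near_nz z0) => w w0; apply: H. Qed.

Lemma pd_sym F s z (i j : 'I_n) : smooth_off0 F -> z != 0 ->
  pd j (pd i (iterpd s F)) z = pd i (pd j (iterpd s F)) z.
Proof.
move=> H z0.
exact: (schwarz (sm_near s H z0) (sm_diff (i :: s) H z0) (sm_diff (j :: s) H z0)).
Qed.

Lemma euler_D F z : is_finsler F -> z != 0 -> 'D_z F z = F z.
Proof.
case=> _ hom _ _ z0.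
apply: (derive_quot _).2; near=> h.
have h1 : 0 < 1 + h.
  have : `|h| < 1 by near: h; apply: dnbhs0_lt.
  by rewrite ltr_norml => /andP[? _]; rewrite -ltrBlDl sub0r.
rewrite (_ : h *: z + z = (1 + h) *: z); last by rewrite scalerDl scale1r addrC.
rewrite hom // -[h^-1 *: _]/(h^-1 * _) mulrDl mul1r addrAC subrr add0r.
rewrite mulrA mulVf ?mul1r //.
near: h; exact: nbhs_dnbhs_neq.
Unshelve. all: by end_near. Qed.

Lemma euler1 F z : is_finsler F -> z != 0 -> \sum_(i < n) z 0 i * pd i F z = F z.
Proof.
move=> HF z0; have [_ _ Hs _] := HF.
have dF : differentiable F z := sm_diff [::] Hs z0.
rewrite -(euler_D HF z0) deriveE //.
have -> : 'd F z z = 'd F z (\sum_(j < n) z 0 j *: 'e_j) by rewrite -row_sum_delta.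
rewrite linear_sum; apply: eq_bigr => i _.
by rewrite linearZ /pd deriveE.
Qed.

Lemma pd_sum (h : 'I_n -> V -> R) z (i : 'I_n) :
  (forall k, derivable (h k) z (e_ i)) ->
  pd i (fun w => \sum_(k < n) h k w) z = \sum_(k < n) pd i (h k) z.
Proof.
move=> dh; rewrite /pd.
have -> : (fun w => \sum_(k < n) h k w) = \sum_(k < n) h k.
  by apply/funext => w; rewrite fct_sumE.
exact: derive_sum.
Qed.

Lemma sum_delta (c : 'I_n -> R) (j : 'I_n) : \sum_(i < n) c i * (j == i)%:R = c j.
Proof.
rewrite (bigD1 j) //= eqxx mulr1 big1 ?addr0 // => i ij.
by rewrite eq_sym (negbTE ij) mulr0.
Qed.

Lemma euler2 F z (j : 'I_n) : is_finsler F -> z != 0 ->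
  \sum_(i < n) z 0 i * pd j (pd i F) z = 0.
Proof.
move=> HF z0; have [_ _ Hs _] := HF.
have E : pd j (fun w => \sum_(i < n) w 0 i * pd i F w) z = pd j F z.
  apply: pd_near; apply: filterS (near_nz z0) => w w0; exact: euler1.
rewrite pd_sum in E; last first.
  move=> k; apply: derivableM; first exact: (pd_coord k j z).1.
  exact: (@sm_der F [:: k] z _ Hs z0).
have E2 : \sum_(i < n) pd j (fun w => w 0 i * pd i F w) z =
   \sum_(i < n) z 0 i * pd j (pd i F) z + pd j F z.
  rewrite -[in X in _ = _ + X](sum_delta (fun i => pd i F z) j) -big_split /=.
  apply: eq_bigr => i _; rewrite pdM; last 2 first.
    exact: (pd_coord i j z).1.
    exact: (@sm_der F [:: i] z _ Hs z0).
  by rewrite (pd_coord i j z).2.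
by move: E; rewrite E2 => /(congr1 (fun t => t - pd j F z)); rewrite addrK subrr.
Qed.

Lemma euler3 F z (j k : 'I_n) : is_finsler F -> z != 0 ->
  \sum_(i < n) z 0 i * pd k (pd j (pd i F)) z + pd j (pd k F) z = 0.
Proof.
move=> HF z0; have [_ _ Hs _] := HF.
have E : pd k (fun w => \sum_(i < n) w 0 i * pd j (pd i F) w) z = pd k (fun _ => 0) z.
  apply: pd_near; apply: filterS (near_nz z0) => w w0; exact: euler2.
rewrite pd_cst pd_sum in E; last first.
  move=> i; apply: derivableM; first exact: (pd_coord i k z).1.
  exact: (@sm_der F [:: j; i] z _ Hs z0).
apply: (etrans _ E); rewrite -[in X in _ + X](sum_delta (fun i => pd j (pd i F) z) k) -big_split /=.
apply: eq_bigr => i _; rewrite pdM; last 2 first.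
  exact: (pd_coord i k z).1.
  exact: (@sm_der F [:: j; i] z _ Hs z0).
by rewrite (pd_coord i k z).2.
Qed.

Lemma derivable_kF (k : R) f z (v : V) : derivable f z v -> derivable (fun w => k * f w) z v.
Proof. by move=> df; apply: derivableM => //; exact: derivable_cst. Qed.

Lemma G1 F (s : R) (b : V) z (i : 'I_n) : smooth_off0 F -> z != 0 ->
  pd i (conf_beta F s b) z = expR s * pd i F z + b 0 i.
Proof.
move=> Hs z0; rewrite /conf_beta pdD.
- by rewrite pdZ ?(pd_beta b i z).2 //; exact: (@sm_der F [::] z _ Hs z0).
- by apply: derivable_kF; exact: (@sm_der F [::] z _ Hs z0).
- exact: (pd_beta b i z).1.
Qed.

Lemma G2 F (s : R) (b : V) z (i j : 'I_n) : smooth_off0 F -> z != 0 ->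
  pd j (pd i (conf_beta F s b)) z = expR s * pd j (pd i F) z.
Proof.
move=> Hs z0.
rewrite (@pd_near _ (fun w => expR s * pd i F w + b 0 i)); last first.
  by apply: filterS (near_nz z0) => w w0; exact: G1.
rewrite pdD ?pd_cst ?addr0 ?pdZ //.
- exact: (@sm_der F [:: i] z _ Hs z0).
- by apply: derivable_kF; exact: (@sm_der F [:: i] z _ Hs z0).
Qed.

Lemma G3 F (s : R) (b : V) z (i j k : 'I_n) : smooth_off0 F -> z != 0 ->
  pd k (pd j (pd i (conf_beta F s b))) z = expR s * pd k (pd j (pd i F)) z.
Proof.
move=> Hs z0.
rewrite (@pd_near _ (fun w => expR s * pd j (pd i F) w)); last first.
  by apply: filterS (near_nz z0) => w w0; exact: G2.
by rewrite pdZ //; exact: (@sm_der F [:: j; i] z _ Hs z0).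
Qed.

Lemma derivableM' f g z (v : V) : derivable f z v -> derivable g z v ->
  derivable (fun w => f w * g w) z v.
Proof. exact: derivableM. Qed.

Lemma g_form F z (i j : 'I_n) : smooth_off0 F -> z != 0 ->
  gF F z i j = pd i F z * pd j F z + F z * pd j (pd i F) z.
Proof.
move=> Hs z0; rewrite /gF mxE.
have E : \forall w \near z, pd i (fun y => F y ^+ 2) w = 2 * (F w * pd i F w).
  apply: filterS (near_nz z0) => w w0.
  have -> : (fun y => F y ^+ 2) = (fun y => F y * F y) by apply/funext => y; rewrite expr2.
  rewrite pdM; first by rewrite mulr_natl mulr2n.
  - exact: (@sm_der F [::] w _ Hs w0).
  - exact: (@sm_der F [::] w _ Hs w0).
rewrite (pd_near j E) pdZ; last first.
  by apply: derivableM; [exact: (@sm_der F [::] z _ Hs z0)|exact: (@sm_der F [:: i] z _ Hs z0)].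
rewrite mulrA mulVf ?pnatr_eq0 // mul1r pdM.
- by rewrite addrC mulrC.
- exact: (@sm_der F [::] z _ Hs z0).
- exact: (@sm_der F [:: i] z _ Hs z0).
Qed.

Lemma ring8 (a b c d e f g h : R) :
  2^-1 * ((a * b + c * d) + (e * f + g * h)) = 2^-1 * (d * c + a * b + (h * g + e * f)).
Proof. ring. Qed.

Lemma c_form F z (i j k : 'I_n) : smooth_off0 F -> z != 0 ->
  cF F i j k z = 2^-1 * (pd k (pd i F) z * pd j F z + pd i F z * pd k (pd j F) z
    + (pd k F z * pd j (pd i F) z + F z * pd k (pd j (pd i F)) z)).
Proof.
move=> Hs z0; rewrite /cF.
rewrite (@pd_near _ (fun w => pd i F w * pd j F w + F w * pd j (pd i F) w)); last first.
  by apply: filterS (near_nz z0) => w w0; exact: g_form.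
have d0 : derivable F z (e_ k) := (@sm_der F [::] z (e_ k) Hs z0).
have di : derivable (pd i F) z (e_ k) := (@sm_der F [:: i] z (e_ k) Hs z0).
have dj : derivable (pd j F) z (e_ k) := (@sm_der F [:: j] z (e_ k) Hs z0).
have dij : derivable (pd j (pd i F)) z (e_ k) := (@sm_der F [:: j; i] z (e_ k) Hs z0).
have d1 := derivableM' di dj.
have d2 := derivableM' d0 dij.
have E1 := pdD d1 d2. have E2 := pdM di dj. have E3 := pdM d0 dij.
rewrite E1 E2 E3; exact: ring8.
Qed.

Lemma T_swap F z (i j k : 'I_n) : smooth_off0 F -> z != 0 ->
  pd k (pd j (pd i F)) z = pd k (pd i (pd j F)) z.
Proof.
move=> Hs z0; apply: pd_near; apply: filterS (near_nz z0) => w w0.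
exact: (@pd_sym F [::] w i j Hs w0).
Qed.

End F.

Section Core.
Context {R : realFieldType} {n : nat}.

Definition cvv (cc : 'I_n -> 'I_n -> 'I_n -> R) (g : 'M[R]_n) (i : 'I_n) :=
  \sum_(j < n) \sum_(k < n) invmx g j k * cc i j k.

Definition Kex (L0 : R) (lv : 'I_n -> R) (g : 'M[R]_n)
  (cc : 'I_n -> 'I_n -> 'I_n -> R) (i j k : 'I_n) :=
  L0^-1 * (cc i j k - ((g i j - lv i * lv j) * (cvv cc g k / (n.+1)%:R)
     + (g k j - lv k * lv j) * (cvv cc g i / (n.+1)%:R)
     + (g k i - lv k * lv i) * (cvv cc g j / (n.+1)%:R))).

Lemma sum_delta' (c : 'I_n -> R) (j : 'I_n) : \sum_(i < n) (i == j)%:R * c i = c j.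
Proof.
rewrite (bigD1 j) //= eqxx mul1r big1 ?addr0 // => i ij.
by rewrite (negbTE ij) mul0r.
Qed.

Lemma invmx_sym (g : 'M[R]_n) : (forall i j, g i j = g j i) ->
  forall i j, invmx g i j = invmx g j i.
Proof.
move=> gs i j.
have gT : g^T = g by apply/matrixP => p q; rewrite mxE gs.
by rewrite -[in RHS]gT -trmx_inv mxE.
Qed.

Lemma inv_apply (g : 'M[R]_n) (v y : 'I_n -> R) (s : R) : g \in unitmx -> s != 0 ->
  (forall j, \sum_(k < n) g j k * y k = s * v j) ->
  forall j, \sum_(k < n) invmx g j k * v k = y j / s.
Proof.
move=> gu s0 H j.
pose yc : 'cV[R]_n := \col_k y k.
pose vc : 'cV[R]_n := \col_k v k.
have E : g *m yc = s *: vc.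
  apply/matrixP => p q; rewrite !mxE; under eq_bigr do rewrite mxE.
  by rewrite H.
have E2 : s *: (invmx g *m vc) = yc by rewrite scalemxAr -E mulKmx.
have := congr1 (fun M : 'cV[R]_n => M j 0) E2; rewrite !mxE.
under eq_bigr do rewrite mxE.
by move=> <-; rewrite mulrC mulKf.
Qed.

Lemma core (Fz a bt G0 : R) (l lG : 'I_n -> R) (b y : 'rV[R]_n)
  (P : 'I_n -> 'I_n -> R) (T : 'I_n -> 'I_n -> 'I_n -> R)
  (gm gmG : 'M[R]_n) (c cG : 'I_n -> 'I_n -> 'I_n -> R) :
  0 < Fz -> 0 < a -> 0 < G0 ->
  G0 = a * Fz + bt ->
  bt = \sum_(i < n) b 0 i * y 0 i ->
  (forall i, lG i = a * l i + b 0 i) ->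
  (forall i j, P i j = P j i) ->
  (forall i j k, T i j k = T i k j) ->
  (forall i j k, T i j k = T j i k) ->
  \sum_(i < n) y 0 i * l i = Fz ->
  (forall j, \sum_(i < n) y 0 i * P i j = 0) ->
  (forall j k, \sum_(i < n) y 0 i * T i j k + P k j = 0) ->
  gm \in unitmx -> gmG \in unitmx ->
  (forall i j, gm i j = l i * l j + Fz * P i j) ->
  (forall i j, gmG i j = lG i * lG j + G0 * (a * P i j)) ->
  (forall i j k, c i j k =
     2^-1 * (P i k * l j + l i * P j k + (l k * P i j + Fz * T i j k))) ->
  (forall i j k, cG i j k =
     2^-1 * (a * P i k * lG j + lG i * (a * P j k)
             + (lG k * (a * P i j) + G0 * (a * T i j k)))) ->
  forall i j k, Kex G0 lG gmG cG i j k = a * Kex Fz l gm c i j k.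
Proof.
move=> Fzp ap G0p hG0 hbt hlG Psym Tjk Tij hyl hyP hyT gu gGu hgm hgmG hc hcG.
have Fz0 : Fz != 0 by rewrite gt_eqF.
have a0 : a != 0 by rewrite gt_eqF.
have G00 : G0 != 0 by rewrite gt_eqF.
pose rho := a * G0 / Fz.
have rho0 : rho != 0 by rewrite /rho mulf_neq0 ?invr_eq0 // mulf_neq0.
pose m := fun i => b 0 i - bt / Fz * l i.
have f1 : \sum_(i < n) y 0 i * b 0 i = bt.
  by rewrite hbt; apply: eq_bigr => i _; rewrite mulrC.
have hym : \sum_(i < n) y 0 i * m i = 0.
  have f2 : \sum_(i < n) y 0 i * (bt / Fz * l i) = bt.
    by under eq_bigr do rewrite mulrCA; rewrite -mulr_sumr hyl divfK.
  by rewrite /m; under eq_bigr do rewrite mulrBr; rewrite sumrB f1 f2 subrr.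
have hylG : \sum_(i < n) y 0 i * lG i = G0.
  under eq_bigr do rewrite hlG mulrDr mulrCA.
  by rewrite big_split /= -mulr_sumr hyl f1 hG0.
have hyP' : forall i, \sum_(k < n) y 0 k * P i k = 0.
  by move=> i; rewrite -[RHS](hyP i); apply: eq_bigr => k _; rewrite Psym.
have hyT' : forall i j, \sum_(k < n) y 0 k * T i j k = - P i j.
  have T3 : forall i j k, T i j k = T k j i by move=> i j k; rewrite Tjk Tij Tjk.
  move=> i j; apply/eqP; rewrite -addr_eq0; apply/eqP; rewrite -[RHS](hyT j i).
  by congr (_ + _); apply: eq_bigr => k _; rewrite T3.
have hA : forall i j k, cG i j k =
    rho * c i j k + a / 2 * (P j k * m i + P i k * m j + P i j * m k).
  by move=> i j k; rewrite hcG hc !hlG /rho /m hG0; field.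
have csym : forall i j k, c i j k = c i k j.
  by move=> i j k; rewrite !hc (Psym k j) (Tjk i k j); ring.
have cGsym : forall i j k, cG i j k = cG i k j.
  by move=> i j k; rewrite !hA csym (Psym k j); ring.
have hyc0 : forall i j, \sum_(k < n) y 0 k * c i j k = 0.
  move=> i j.
  transitivity (\sum_(k < n) (2^-1 * l j * (y 0 k * P i k) + 2^-1 * l i * (y 0 k * P j k)
     + 2^-1 * P i j * (y 0 k * l k) + 2^-1 * Fz * (y 0 k * T i j k))).
    by apply: eq_bigr => k _; rewrite hc; ring.
  by rewrite !big_split -!mulr_sumr /= !hyP' hyl hyT'; ring.
have hyc : forall i j, \sum_(k < n) y 0 k * cG i j k = 0.
  move=> i j.
  transitivity (\sum_(k < n) (rho * (y 0 k * c i j k) + a / 2 * m i * (y 0 k * P j k)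
     + a / 2 * m j * (y 0 k * P i k) + a / 2 * P i j * (y 0 k * m k))).
    by apply: eq_bigr => k _; rewrite hA; ring.
  by rewrite !big_split -!mulr_sumr /= !hyP' hyc0 hym; ring.
have hyc2 : forall i k, \sum_(j < n) y 0 j * cG i j k = 0.
  by move=> i k; rewrite -[RHS](hyc i k); apply: eq_bigr => j _; rewrite cGsym.
pose A := invmx gm; pose AG := invmx gmG.
have gsym : forall i j, gm i j = gm j i by move=> i j; rewrite !hgm Psym; ring.
have Asym : forall i j, A i j = A j i := invmx_sym gsym.
have hAl : forall j, \sum_(k < n) A j k * l k = y 0 j / Fz.
  apply: (inv_apply gu Fz0) => j.
  transitivity (\sum_(k < n) (l j * (y 0 k * l k) + Fz * (y 0 k * P j k))).
    by apply: eq_bigr => k _; rewrite hgm; ring.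
  by rewrite big_split -!mulr_sumr /= hyl hyP'; ring.
have hAGl : forall j, \sum_(k < n) AG j k * lG k = y 0 j / G0.
  apply: (inv_apply gGu G00) => j.
  transitivity (\sum_(k < n) (lG j * (y 0 k * lG k) + G0 * a * (y 0 k * P j k))).
    by apply: eq_bigr => k _; rewrite hgmG; ring.
  by rewrite big_split -!mulr_sumr /= hylG hyP'; ring.
have hlA : forall k, \sum_(q < n) l q * A q k = y 0 k / Fz.
  by move=> k; rewrite -hAl; apply: eq_bigr => q _; rewrite Asym mulrC.
pose lr : 'rV[R]_n := \row_i l i.
pose lGr : 'rV[R]_n := \row_i lG i.
have gX : gm - rho^-1 *: gmG = lr^T *m lr - rho^-1 *: (lGr^T *m lGr).
  apply/matrixP => p q; rewrite !mxE !big_ord1 !mxE hgm hgmG /rho; field.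
  by rewrite Fz0 a0 G00.
have DX : AG - rho^-1 *: A =
    (AG *m lr^T) *m (lr *m A) - rho^-1 *: ((AG *m lGr^T) *m (lGr *m A)).
  rewrite -!mulmxA [lr^T *m (lr *m A)]mulmxA [lGr^T *m (lGr *m A)]mulmxA.
  rewrite scalemxAr -mulmxBr scalemxAl -mulmxBl -gX.
  rewrite mulmxBl mulmxV // mulmxBr mulmx1 -scalemxAl -scalemxAr.
  by rewrite mulmxA mulVmx // mul1mx.
have q1 : forall j, (AG *m lr^T) j 0 = \sum_(p < n) AG j p * l p.
  by move=> j; rewrite mxE; apply: eq_bigr => p _; rewrite !mxE.
have q2 : forall k, (lr *m A) 0 k = y 0 k / Fz.
  by move=> k; rewrite -hlA mxE; apply: eq_bigr => p _; rewrite !mxE.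
have q3 : forall j, (AG *m lGr^T) j 0 = y 0 j / G0.
  by move=> j; rewrite -hAGl mxE; apply: eq_bigr => p _; rewrite !mxE.
have q4 : forall k, (lGr *m A) 0 k = \sum_(q < n) lG q * A q k.
  by move=> k; rewrite mxE; apply: eq_bigr => p _; rewrite !mxE.
have hD : forall j k, AG j k = rho^-1 * A j k + (\sum_(p < n) AG j p * l p) * (y 0 k / Fz)
    - rho^-1 * (y 0 j / G0 * \sum_(q < n) lG q * A q k).
  move=> j k; have := congr1 (fun M : 'M[R]_n => M j k) DX.
  set U1 := AG *m lr^T; set W1 := lr *m A; set U2 := AG *m lGr^T; set W2 := lGr *m A.
  rewrite /= !mxE !big_ord1 /U1 /W1 /U2 /W2 q1 q2 q3 q4 => H.
  by rewrite -[AG j k](subrK (rho^-1 * A j k)) H; ring.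
have hcvG : forall i, cvv cG gmG i = rho^-1 * \sum_(j < n) \sum_(k < n) A j k * cG i j k.
  move=> i; rewrite /cvv -/AG.
  transitivity (\sum_(j < n) \sum_(k < n) (rho^-1 * (A j k * cG i j k)
     + (\sum_(p < n) AG j p * l p) / Fz * (y 0 k * cG i j k)
     - rho^-1 / G0 * (\sum_(q < n) lG q * A q k) * (y 0 j * cG i j k))).
    by apply: eq_bigr => j _; apply: eq_bigr => k _; rewrite hD; ring.
  under eq_bigr do rewrite sumrB big_split /=.
  rewrite sumrB big_split /=.
  have HY : \sum_(j < n) \sum_(k < n) (\sum_(p < n) AG j p * l p) / Fz * (y 0 k * cG i j k) = 0.
    by rewrite big1 // => j _; rewrite -mulr_sumr hyc mulr0.
  have HZ : \sum_(j < n) \sum_(k < n)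
      rho^-1 / G0 * (\sum_(q < n) lG q * A q k) * (y 0 j * cG i j k) = 0.
    by rewrite exchange_big big1 // => k _; rewrite -mulr_sumr hyc2 mulr0.
  rewrite HY HZ addr0 subr0 mulr_sumr; apply: eq_bigr => j _.
  by rewrite mulr_sumr.
have hAg : forall i j, \sum_(k < n) A i k * gm k j = (i == j)%:R.
  by move=> i j; have := congr1 (fun M : 'M[R]_n => M i j) (mulVmx gu); rewrite !mxE.
have hgA : forall i j, \sum_(k < n) gm i k * A k j = (i == j)%:R.
  by move=> i j; have := congr1 (fun M : 'M[R]_n => M i j) (mulmxV gu); rewrite !mxE.
have S1 : \sum_(j < n) \sum_(k < n) A j k * (Fz * P j k) = n%:R - 1.
  transitivity (\sum_(j < n) ((j == j)%:R - l j * (y 0 j / Fz))).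
    apply: eq_bigr => j _; rewrite -hAg -hAl mulr_sumr -sumrB.
    by apply: eq_bigr => k _; rewrite hgm (Psym k j); ring.
  rewrite sumrB; under eq_bigr do rewrite eqxx.
  rewrite sumr_const card_ord; congr (_ - _).
  transitivity ((\sum_(j < n) y 0 j * l j) / Fz); last by rewrite hyl divff.
  by rewrite mulr_suml; apply: eq_bigr => j _; ring.
have inner : forall i j, \sum_(k < n) A j k * (Fz * P i k) = (i == j)%:R - l i * (y 0 j / Fz).
  move=> i j; rewrite -hgA -hAl mulr_sumr -sumrB.
  by apply: eq_bigr => k _; rewrite hgm (Asym k j); ring.
have S2 : forall i, \sum_(j < n) \sum_(k < n) A j k * (Fz * P i k) * m j = m i.
  move=> i.
  transitivity (\sum_(j < n) m j * ((i == j)%:R - l i * (y 0 j / Fz))).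
    by apply: eq_bigr => j _; rewrite -inner mulr_sumr; apply: eq_bigr => k _; ring.
  under eq_bigr do rewrite mulrBr.
  rewrite sumrB (eq_bigr (fun j => (j == i)%:R * m j)); last first.
    by move=> j _; rewrite mulrC eq_sym.
  rewrite sum_delta' (eq_bigr (fun j => l i / Fz * (y 0 j * m j))); last first.
    by move=> j _; ring.
  by rewrite -mulr_sumr hym mulr0 subr0.
have S3 : forall i, \sum_(j < n) \sum_(k < n) A j k * (Fz * P i j) * m k = m i.
  move=> i; rewrite exchange_big -[RHS](S2 i).
  by apply: eq_bigr => j _; apply: eq_bigr => k _; rewrite (Asym k j).
have hSum : forall i, \sum_(j < n) \sum_(k < n) A j k * cG i j k =
    rho * cvv c gm i + a / (2 * Fz) * (m i * (n%:R - 1) + m i + m i).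
  move=> i.
  transitivity (\sum_(j < n) \sum_(k < n) (rho * (A j k * c i j k)
     + a / (2 * Fz) * m i * (A j k * (Fz * P j k))
     + a / (2 * Fz) * (A j k * (Fz * P i k) * m j)
     + a / (2 * Fz) * (A j k * (Fz * P i j) * m k))).
    by apply: eq_bigr => j _; apply: eq_bigr => k _; rewrite hA; field.
  under eq_bigr do rewrite !big_split /= -!mulr_sumr.
  rewrite !big_split /= -!mulr_sumr S1 S2 S3 /cvv -/A; ring.
have hcv : forall i, cvv cG gmG i = cvv c gm i + (n.+1)%:R * m i / (2 * G0).
  move=> i; rewrite hcvG hSum /rho; field.
  by rewrite Fz0 a0 G00.
move=> i j k; rewrite /Kex !hcv hA !hgmG !hgm (Psym k j) (Psym k i) /rho /m.
field.
rewrite Fz0 G00 /= andbT; apply: lt0r_neq0.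
by have := ler0n R n; lra.
Qed.
End Core.

Lemma posdef_unit (R : realFieldType) n (A : 'M[R]_n) :
  (forall v : 'rV[R]_n, v != 0 -> 0 < (v *m A *m v^T) 0 0) -> A \in unitmx.
Proof.
move=> H; rewrite unitmxE unitfE; apply/negP => /det0P [v v0 vA].
by have := H v v0; rewrite vA mul0mx mxE ltxx.
Qed.

Theorem proposition1 (R : realType) (n : nat)
  (L : 'rV[R]_n -> 'rV[R]_n -> R) (sigma : 'rV[R]_n -> R)
  (b : 'rV[R]_n -> 'rV[R]_n) :
  (3 <= n)%N ->
  (forall x, is_finsler (L x)) ->
  (forall x, is_finsler (conf_beta (L x) (sigma x) (b x))) ->
  forall (x y : 'rV[R]_n), y != 0 -> forall i j k : 'I_n,
    KF (conf_beta (L x) (sigma x) (b x)) i j k y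
      = expR (sigma x) * KF (L x) i j k y.
Proof.
move=> _ HL HG x y y0 i j k.
have HF := HL x; have [Fpos _ Fs Fpd] := HF.
have [Gpos _ Gs Gpd] := HG x.
have KE : forall H : 'rV[R]_n -> R, KF H i j k y =
    Kex (H y) (fun t => lF H t y) (gF H y) (fun p q r => cF H p q r y) i j k by [].
rewrite !KE.
apply: (@core R n (L x y) (expR (sigma x)) (betaF (b x) y)
  (conf_beta (L x) (sigma x) (b x) y)
  (fun t => lF (L x) t y) (fun t => lF (conf_beta (L x) (sigma x) (b x)) t y) (b x) y
  (fun p q => pd q (pd p (L x)) y) (fun p q r => pd r (pd q (pd p (L x))) y)
  (gF (L x) y) (gF (conf_beta (L x) (sigma x) (b x)) y)
  (fun p q r => cF (L x) p q r y) (fun p q r => cF (conf_beta (L x) (sigma x) (b x)) p q r y)).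
- exact: Fpos.
- exact: expR_gt0.
- exact: Gpos.
- by [].
- by [].
- by move=> t; exact: G1.
- by move=> p q; exact: (@pd_sym R n (L x) [::] y p q Fs y0).
- by move=> p q r; exact: (@pd_sym R n (L x) [:: p] y q r Fs y0).
- by move=> p q r; exact: T_swap.
- exact: euler1.
- by move=> q; exact: euler2.
- by move=> q r; exact: euler3.
- exact: posdef_unit (Fpd y y0).
- exact: posdef_unit (Gpd y y0).
- by move=> p q; exact: g_form.
- by move=> p q; rewrite g_form // G2.
- by move=> p q r; exact: c_form.
- move=> p q r; rewrite c_form // (@G3 R n (L x) (sigma x) (b x) y p q r Fs y0).
  rewrite (@G2 R n (L x) (sigma x) (b x) y p r Fs y0) (@G2 R n (L x) (sigma x) (b x) y q r Fs y0).
  by rewrite (@G2 R n (L x) (sigma x) (b x) y p q Fs y0).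
Qed.
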